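(* Let $\lambda$ be a (straight or skew) shape with $n$ boxes and let $m\in\mathbb N=\{1,2,3,\dots\}$. Then $$\#T[\lambda,m,+]=\#T[\lambda,m,-]=2^{n-1}f^{\lambda},$$ where $f^\lambda$ is the number of standard Young tableaux of shape $\lambda$ (fillings of $\lambda$ by $1,\dots,n$ increasing along rows and down columns).
   Context: Boxes of a diagram are indexed by (row $i$, column $j$), rows numbered downward and columns rightward; the content of the box $(i,j)$ is $j-i$. A D-Young tableau is a filling of a skew diagram by the $2n$ numbers $\pm1,\dots,\pm n$, each number in exactly one box and each box containing one number, except that a box of content $0$ may contain a pair $\pm i$; writing $c_k$ for the content of the box containing $k$, one requires $c_{-k}=-c_k$ for all $k$. It is standard if entries increase from left to right along rows and from top to bottom down columns (a box containing the pair $\pm i$, $i>0$, counts as $-i$ when compared with entries to its left or above and as $i$ when compared with entries to its right or below). A D-Young tableau with no box of content $0$ is regarded as determined by its boxes of positive content together with their entries and contents (i.e. its positive-content part up to translation by multiples of $(1,1)$); the negative part is then forced. For a shape $\lambda$ with $n$ boxes and $m\in\mathbb N$, $T[\lambda,m,+]$ (resp. $T[\lambda,m,-]$) is the set of standard D-Young tableaux whose smallest nonnegative content equals $m$, whose boxes of positive content form the shape $\lambda$, and in which the number of negative entries among the boxes of positive content is even (resp. odd). *)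

(* Defs.v *)
From HB Require Import structures.
From mathcomp Require Import all_boot all_order all_algebra.
From mathcomp Require Import finmap.
Set Implicit Arguments. Unset Strict Implicit. Unset Printing Implicit Defensive.
Import Order.TTheory GRing.Theory Num.Theory.
Local Open Scope fset_scope.
Local Open Scope fmap_scope.
Local Open Scope ring_scope.

(* Boxes are pairs (row i, column j) of integers; rows go downward,
   columns rightward.  The content of (i,j) is j - i. *)
Definition box := (int * int)%type.
Definition content (b : box) : int := b.2 - b.1.

Definition is_partition (s : seq nat) : bool :=
  sorted geq s && all (fun x => 0 < x)%N s.

Definition part_contains (la mu : seq nat) : bool :=
  (size mu <= size la)%N &&
  all (fun i => nth 0 mu i <= nth 0 la i)%N (iota 0 (size mu)).

Definition skew_box_seq (la mu : seq nat) : seq box :=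
  flatten [seq [seq (Posz i, Posz j)
                 | j <- iota (nth 0 mu i) (nth 0 la i - nth 0 mu i)]
           | i <- iota 0 (size la)].
Definition skew_boxes (la mu : seq nat) : {fset box} :=
  [fset b | b in skew_box_seq la mu].

Definition translate (d : box) (b : box) : box := (b.1 + d.1, b.2 + d.2).

Definition is_skew_diagram (D : {fset box}) : Prop :=
  exists (la mu : seq nat) (d : box),
    [/\ is_partition la, is_partition mu, part_contains la mu &
        D = [fset translate d b | b in skew_boxes la mu]].

Definition signed_range (n : nat) : seq int :=
  [seq - (Posz k) | k <- iota 1 n] ++ [seq Posz k | k <- iota 1 n].

(* A filling: each box of the diagram (= domain) carries the list of the
   numbers it contains; a pair +-i is stored as [:: -i; i]. *)
Definition filling := {fmap box -> seq int}.
Definition cell (t : filling) (b : box) : seq int := odflt [::] t.[? b].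

Definition is_DYoung (n : nat) (t : filling) : Prop :=
  [/\ is_skew_diagram (domf t),
      (forall k, k \in signed_range n ->
         exists! b, b \in domf t /\ k \in cell t b),
      (forall b k, b \in domf t -> k \in cell t b -> k \in signed_range n),
      (forall b, b \in domf t ->
         (exists k, cell t b = [:: k]) \/
         (content b = 0 /\ exists i : nat, (0 < i)%N /\
                                cell t b = [:: - Posz i; Posz i])) &
      (forall b b' k, b \in domf t -> b' \in domf t ->
         k \in cell t b -> - k \in cell t b' -> content b' = - content b)].

(* Value of a box when compared with entries to its right/below (rval) and
   with entries to its left/above (lval): a pair +-i counts as i resp. -i. *)
Definition rval (s : seq int) : int := last 0 s.
Definition lval (s : seq int) : int := head 0 s.

Definition is_standard (t : filling) : Prop :=
  forall b b', b \in domf t -> b' \in domf t ->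
    ((b.1 = b'.1 /\ b.2 < b'.2) \/ (b.2 = b'.2 /\ b.1 < b'.1)) ->
    rval (cell t b) < lval (cell t b').

Definition smallest_nonneg_content (t : filling) (m : int) : Prop :=
  (exists b, b \in domf t /\ content b = m) /\
  (forall b, b \in domf t -> 0 <= content b -> m <= content b).

Definition neg_count_pos (t : filling) : nat :=
  count (fun b => (0 < content b) && has (fun k => k < 0) (cell t b))
        (enum_fset (domf t)).

Definition pos_part_is (t : filling) (la mu : seq nat)
    (f : {fmap box -> int}) : Prop :=
  exists d : box,
    (forall b, (b \in domf t /\ 0 < content b) <->
               exists2 x, x \in skew_boxes la mu & b = translate d x) /\
    (forall x, x \in skew_boxes la mu ->
               cell t (translate d x) = [:: odflt 0 f.[? x]]).

(* T[la/mu, m, +] (even = true) and T[la/mu, m, -] (even = false): a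
   D-Young tableau without content-0 box is identified with its
   positive-content part up to translation, i.e. with the filling f of
   la/mu it induces. *)
Definition T_set (n : nat) (la mu : seq nat) (m : nat) (even : bool)
    (f : {fmap box -> int}) : Prop :=
  domf f = skew_boxes la mu /\
  exists t : filling,
    [/\ is_DYoung n t, is_standard t, smallest_nonneg_content t (Posz m),
        pos_part_is t la mu f & ~~ odd (neg_count_pos t) = even].

Definition is_SYT (n : nat) (la mu : seq nat) (g : {fmap box -> nat}) : Prop :=
  [/\ domf g = skew_boxes la mu,
      (forall x, x \in domf g -> (1 <= odflt 0%N g.[? x] <= n)%N),
      (forall x y, x \in domf g -> y \in domf g ->
         g.[? x] = g.[? y] -> x = y) &
      (forall x y, x \in domf g -> y \in domf g ->
         ((x.1 = y.1 /\ x.2 < y.2) \/ (x.2 = y.2 /\ x.1 < y.1)) ->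
         (odflt 0%N g.[? x] < odflt 0%N g.[? y])%N)].

Definition card_is {T : eqType} (P : T -> Prop) (k : nat) : Prop :=
  exists s : seq T, [/\ uniq s, (forall x, P x <-> x \in s) & size s = k].

(* Main.v *)
Require Import Defs.
From HB Require Import structures.
From mathcomp Require Import all_boot all_order all_algebra.
From mathcomp Require Import finmap zify.
Set Implicit Arguments. Unset Strict Implicit. Unset Printing Implicit Defensive.
Import Order.TTheory GRing.Theory Num.Theory.
Local Open Scope fset_scope.
Local Open Scope fmap_scope.
Local Open Scope ring_scope.

Section SortInt.
Variable s : seq int.
Hypothesis us : uniq s.
Let ss := sort <=%O s.

Lemma ss_size : size ss = size s. Proof. exact: size_sort. Qed.
Lemma ss_uniq : uniq ss. Proof. by rewrite sort_uniq. Qed.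
Lemma ss_lt_sorted : sorted <%O ss. Proof. by rewrite sort_lt_sorted. Qed.

Lemma ss_lt i j : (i < size s)%N -> (j < size s)%N -> (i < j)%N ->
  nth 0 ss i < nth 0 ss j.
Proof.
move=> ilt jlt ij; apply: (sorted_ltn_nth lt_trans) => //;
  [exact: ss_lt_sorted | by rewrite inE ss_size | by rewrite inE ss_size].
Qed.

Lemma ss_ltE i j : (i < size s)%N -> (j < size s)%N ->
  (nth 0 ss i < nth 0 ss j) = (i < j)%N.
Proof.
move=> ilt jlt; case: (ltngtP i j) => [ij|ji|->].
- by rewrite ss_lt.
- by apply/negbTE; rewrite -leNgt ltW // ss_lt.
- by rewrite ltxx.
Qed.

Lemma ss_nth_index v : v \in s -> nth 0 ss (index v ss) = v.
Proof. by move=> vs; rewrite nth_index // mem_sort. Qed.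

Lemma ss_index_nth i : (i < size s)%N -> index (nth 0 ss i) ss = i.
Proof. by move=> ilt; rewrite index_uniq // ?ss_uniq // ss_size. Qed.

Lemma ss_index_lt v : v \in s -> (index v ss < size s)%N.
Proof. by move=> vs; rewrite -ss_size index_mem mem_sort. Qed.

Lemma ss_nth_mem i : (i < size s)%N -> nth 0 ss i \in s.
Proof. by move=> ilt; rewrite -(mem_sort <=%O) mem_nth // ss_size. Qed.

Lemma ss_index_ltE v v' : v \in s -> v' \in s ->
  (index v ss < index v' ss)%N = (v < v').
Proof.
move=> vs v's; rewrite -ss_ltE ?ss_index_lt // !ss_nth_index //.
Qed.
End SortInt.

Lemma count_enumT (T : finType) (p : pred T) : count p (enum T) = #|p|.
Proof. by rewrite cardE -size_filter /enum_mem filter_predT. Qed.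

Lemma mem_signed_range n (k : int) :
  (k \in signed_range n) = (k != 0) && (absz k <= n)%N.
Proof.
rewrite /signed_range mem_cat; apply/orP/andP.
- case=> /mapP[j]; rewrite mem_iota => /andP[j1 jn] ->; split.
  + by rewrite oppr_eq0; case: j j1 {jn}.
  + by rewrite abszN; rewrite -ltnS; move: jn; rewrite add1n.
  + by case: j j1 {jn}.
  + by move: jn; rewrite add1n ltnS.
- case: k => k [k0 kn].
  + right; apply/mapP; exists k => //; rewrite mem_iota add1n ltnS kn andbT.
    by rewrite lt0n; apply: contra k0 => /eqP->.
  + left; apply/mapP; exists k.+1; first by rewrite mem_iota add1n ltnS.
    by rewrite NegzE.
Qed.

Section Model.
Variable n' : nat.
Local Notation n := n'.+1.

Definition vS (e : {set 'I_n}) (k : 'I_n) : int :=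
  if k \in e then - (Posz k.+1) else Posz k.+1.
Definition VS e : seq int := map (vS e) (enum 'I_n).
Definition sVS e := sort <=%O (VS e).
Definition wS e (r : nat) : int := nth 0 (sVS e) r.
Definition rkS e (v : int) : nat := index v (sVS e).

Lemma abs_vS e k : absz (vS e k) = k.+1.
Proof. by rewrite /vS; case: ifP => _; rewrite ?abszN. Qed.

Lemma vS_inj e : injective (vS e).
Proof. by move=> k k' /(congr1 absz); rewrite !abs_vS => -[] /val_inj. Qed.

Lemma VS_uniq e : uniq (VS e).
Proof. by rewrite map_inj_uniq ?enum_uniq //; apply: vS_inj. Qed.

Lemma size_VS e : size (VS e) = n.
Proof. by rewrite size_map size_enum_ord. Qed.

Lemma mem_VS e v : (v \in VS e) = [exists k, v == vS e k].
Proof.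
apply/mapP/existsP => [[k _ ->]|[k /eqP ->]]; first by exists k.
by exists k; rewrite ?mem_enum.
Qed.

Lemma VS_neg e (k : 'I_n) : (- Posz k.+1 \in VS e) = (k \in e).
Proof.
rewrite mem_VS; apply/existsP/idP => [[k' /eqP]|ke]; last first.
  by exists k; rewrite /vS ke.
rewrite /vS; case: ifP => k'e.
  by move/eqP; rewrite eqr_opp => /eqP [] /val_inj ->.
by move=> /(congr1 (fun z : int => z < 0)); rewrite oppr_lt0 /=.
Qed.

Lemma VS_pos e (k : 'I_n) : (Posz k.+1 \in VS e) = (k \notin e).
Proof.
rewrite mem_VS; apply/existsP/idP => [[k' /eqP]|ke]; last first.
  by exists k; rewrite /vS (negPf ke).
rewrite /vS; case: ifP => k'e.
  by move=> /(congr1 (fun z : int => 0 < z)); rewrite oppr_gt0 /=.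
by move=> [] /val_inj ->; rewrite k'e.
Qed.

Lemma wS_mem e r : (r < n)%N -> wS e r \in VS e.
Proof. by move=> rn; apply: ss_nth_mem; rewrite ?VS_uniq ?size_VS. Qed.

Lemma wS_lt e r r' : (r < n)%N -> (r' < n)%N -> (r < r')%N -> wS e r < wS e r'.
Proof. by move=> *; apply: ss_lt; rewrite ?VS_uniq ?size_VS. Qed.

Lemma wS_ltE e r r' : (r < n)%N -> (r' < n)%N -> (wS e r < wS e r') = (r < r')%N.
Proof. by move=> *; apply: ss_ltE; rewrite ?VS_uniq ?size_VS. Qed.

Lemma wS_inj e r r' : (r < n)%N -> (r' < n)%N -> wS e r = wS e r' -> r = r'.
Proof.
move=> rn r'n E; have := ss_index_nth (VS_uniq e); rewrite size_VS => H.
by rewrite -(H r rn) -(H r' r'n) -/(wS e r) -/(wS e r') E.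
Qed.

Lemma wS_rkS e v : v \in VS e -> wS e (rkS e v) = v.
Proof. by move=> vV; apply: ss_nth_index. Qed.

Lemma rkS_lt e v : v \in VS e -> (rkS e v < n)%N.
Proof. by move=> vV; rewrite -(size_VS e); apply: ss_index_lt; rewrite ?VS_uniq. Qed.

Lemma rkS_ltE e v v' : v \in VS e -> v' \in VS e -> (rkS e v < rkS e v')%N = (v < v').
Proof. by move=> *; apply: ss_index_ltE; rewrite ?VS_uniq. Qed.

Lemma VS_signed e v : v \in VS e -> v \in signed_range n.
Proof.
rewrite mem_VS => /existsP[k /eqP ->]; rewrite mem_signed_range abs_vS ltn_ord andbT.
by rewrite -absz_eq0 abs_vS.
Qed.

Lemma count_neg_VS e : count (fun v : int => v < 0) (VS e) = #|e|.
Proof.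
rewrite count_map -count_enumT; apply: eq_count => k /=.
rewrite /vS; case: ifP => ke /=; rewrite ?oppr_lt0 ?ke //.
Qed.

Lemma card_neg_wS e : #|[pred r : 'I_n | wS e r < 0]| = #|e|.
Proof.
rewrite -count_neg_VS -(permP (permEl (perm_sort <=%O (VS e)))).
rewrite -count_enumT -/(sVS e).
have -> : sVS e = map (wS e) (map val (enum 'I_n)).
  by rewrite val_enum_ord -{1}(mkseq_nth 0 (sVS e)) /mkseq /sVS size_sort size_VS.
by rewrite -map_comp [RHS]count_map; apply: eq_count.
Qed.

End Model.

Lemma fnd_mk (K : choiceType) (V : Type) (A : {fset K}) (h : K -> V) (k : K) :
  ([fmap x : A => h (val x)] : {fmap K -> V}).[? k] =
  if k \in A then Some (h k) else None.
Proof.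
by case: fndP => [kA|kNA] //=; rewrite ffunE.
Qed.

Lemma domf_mk (K : choiceType) (V : Type) (A : {fset K}) (h : K -> V) :
  domf ([fmap x : A => h (val x)] : {fmap K -> V}) = A.
Proof. by []. Qed.

Lemma nat_aux1 (a b j : nat) : (a <= j)%N -> (j < a + (b - a))%N -> (j < b)%N.
Proof. lia. Qed.
Lemma nat_aux2 (a b j : nat) : (a <= j)%N -> (j < b)%N -> (j < a + (b - a))%N.
Proof. lia. Qed.

Lemma mem_skew_seqP la mu (x : box) :
  reflect (exists i j : nat, [/\ x = (Posz i, Posz j), (i < size la)%N,
             (nth 0 mu i <= j)%N & (j < nth 0 la i)%N])
          (x \in skew_box_seq la mu).
Proof.
rewrite /skew_box_seq; change (0%R : nat) with 0%N.
apply: (iffP flattenP) => [[s /mapP[i]]|[i [j [-> il mj jl]]]].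
  rewrite mem_iota add0n => il -> /mapP[j]; rewrite mem_iota => /andP[mj jl] ->.
  exists i, j; split => //; move: mj jl; apply: nat_aux1.
exists [seq (Posz i, Posz j0) | j0 <- iota (nth 0 mu i) (nth 0 la i - nth 0 mu i)].
  by apply/mapP; exists i; rewrite // mem_iota add0n.
by apply/mapP; exists j => //; rewrite mem_iota mj /= nat_aux2.
Qed.

Lemma mem_skewP la mu (x : box) :
  reflect (exists i j : nat, [/\ x = (Posz i, Posz j), (i < size la)%N,
             (nth 0 mu i <= j)%N & (j < nth 0 la i)%N])
          (x \in skew_boxes la mu).
Proof. by rewrite /skew_boxes in_fset; apply: mem_skew_seqP. Qed.

Lemma sorted_geq_nth (s : seq nat) i j : sorted geq s -> (i <= j)%N ->
  (nth 0 s j <= nth 0 s i)%N.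
Proof.
move=> ss ij; case: (ltnP j (size s)) => js; last by rewrite nth_default.
have := sorted_leq_nth (T:=nat) (leT := geq) _ _ 0 ss i j.
apply => //; rewrite ?inE; try lia.
- by move=> a b c /= ab bc; apply: leq_trans bc ab.
- by move=> a /=.
Qed.

Lemma pc_le la mu i : part_contains la mu -> (nth 0 mu i <= nth 0 la i)%N.
Proof.
case/andP=> _ /allP H; case: (ltnP i (size mu)) => im; last by rewrite nth_default.
by apply: H; rewrite mem_iota add0n im.
Qed.

Definition rel_box (x y : box) : Prop :=
  (x.1 = y.1 /\ x.2 < y.2) \/ (x.2 = y.2 /\ x.1 < y.1).

Section Construct.
Variables (la mu : seq nat) (m : nat).
Hypotheses (pla : is_partition la) (pmu : is_partition mu)
           (pc : part_contains la mu) (m0 : (0 < m)%N).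
Local Notation D := (skew_boxes la mu).
Variable xs : box.
Hypotheses (xsD : xs \in D) (xs_max : forall x, x \in D -> x.1 <= xs.1).

Definition r0 := absz xs.1.
Definition c0 := nth 0%N mu r0.
Definition L0 := r0.+1.
Definition W0 := nth 0%N la 0.
Definition delta : int := Posz m - Posz c0 + Posz r0.
Definition X0 := (W0 + 2 * m)%N.
Definition Y0 := (W0 + 2 * c0 + 1)%N.
Definition K0 : int := Posz Y0 + delta - Posz X0.
Definition la' := mkseq (fun k => if (k < L0)%N then (nth 0%N la k + X0)%N
                         else (Y0.+1 - nth 0%N mu (r0 - (k - L0)))%N) (2 * L0).
Definition mu' := mkseq (fun k => if (k < L0)%N then (nth 0%N mu k + X0)%N
                         else (Y0.+1 - nth 0%N la (r0 - (k - L0)))%N) (2 * L0).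
Definition d' : box := (0, delta - Posz X0).
Definition U := [fset translate d' b | b in skew_boxes la' mu'].
Definition trP (x : box) := translate (0, delta) x.
Definition rotR (x : box) : box := (Posz (2 * r0 + 1) - x.1, K0 - x.2).

Lemma la_dec i j : (i <= j)%N -> (nth 0%N la j <= nth 0%N la i)%N.
Proof. by apply: sorted_geq_nth; case/andP: pla. Qed.
Lemma mu_dec i j : (i <= j)%N -> (nth 0%N mu j <= nth 0%N mu i)%N.
Proof. by apply: sorted_geq_nth; case/andP: pmu. Qed.

Lemma xs_prop : [/\ xs = (Posz r0, xs.2), (r0 < size la)%N & (c0 < nth 0%N la r0)%N].
Proof.
case/mem_skewP: xsD => i [j [E il mj jl]]; rewrite /c0 /r0 E /=; split => //.
exact: leq_ltn_trans mj jl.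
Qed.

Lemma D_prop x : x \in D -> exists i j : nat, [/\ x = (Posz i, Posz j),
  (i <= r0)%N, (i < size la)%N, (nth 0%N mu i <= j < nth 0%N la i)%N &
  (c0 <= j < W0)%N].
Proof.
move=> xD; have := xs_max xD; case/mem_skewP: xD => i [j [E il mj jl]].
rewrite E /= => ir; have ir' : (i <= r0)%N.
  by move: ir; rewrite /r0; case: xs.1 => // k; rewrite lez_nat.
exists i, j; split => //; first by rewrite mj jl.
by rewrite (leq_trans (mu_dec ir') mj) (leq_trans jl (la_dec (leq0n i))).
Qed.

Lemma r0c0_D : (Posz r0, Posz c0) \in D.
Proof.
case: xs_prop => _ rl cl; apply/mem_skewP; exists r0, c0; split => //.
Qed.

Lemma size_la' : size la' = (2 * L0)%N. Proof. by rewrite size_mkseq. Qed.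
Lemma size_mu' : size mu' = (2 * L0)%N. Proof. by rewrite size_mkseq. Qed.

Lemma nth_la' k : (k < 2 * L0)%N -> nth 0%N la' k =
  if (k < L0)%N then (nth 0%N la k + X0)%N else (Y0.+1 - nth 0%N mu (r0 - (k - L0)))%N.
Proof. by move=> kl; rewrite nth_mkseq. Qed.
Lemma nth_mu' k : (k < 2 * L0)%N -> nth 0%N mu' k =
  if (k < L0)%N then (nth 0%N mu k + X0)%N else (Y0.+1 - nth 0%N la (r0 - (k - L0)))%N.
Proof. by move=> kl; rewrite nth_mkseq. Qed.

Lemma la_le_W i : (nth 0%N la i <= W0)%N.
Proof. exact: la_dec. Qed.

Lemma memU b : b \in U <->
  (exists2 x, x \in D & b = trP x) \/ (exists2 x, x \in D & b = rotR x).
Proof.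
have c0W : (c0 < W0)%N by case: xs_prop => _ _ h; apply: leq_trans h (la_le_W _).
split.
- case/imfsetP => /= b0 /mem_skewP [k [J [-> kl mJ Jl]]] ->.
  rewrite size_la' in kl; rewrite nth_la' // in Jl; rewrite nth_mu' // in mJ.
  case: ifP mJ Jl => kL mJ Jl.
  + left; exists (Posz k, Posz (J - X0)).
      apply/mem_skewP; exists k, (J - X0)%N; split => //.
      * case: xs_prop => _ rl _; rewrite /L0 in kL; lia.
      * lia.
      * lia.
    rewrite /trP /translate /d' /=; congr (_, _); lia.
  + right; have kL' : (L0 <= k)%N by rewrite leqNgt kL.
    have hla := la_le_W (r0 - (k - L0)).
    have hpc := pc_le (r0 - (k - L0)) pc.
    exists (Posz (r0 - (k - L0)), Posz (Y0 - J)).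
      apply/mem_skewP; exists (r0 - (k - L0))%N, (Y0 - J)%N; split => //.
      * case: xs_prop => _ rl _; lia.
      * move: mJ Jl; rewrite /Y0 /L0 in kl kL' *; lia.
      * move: mJ Jl; rewrite /Y0 /L0 in kl kL' *; lia.
    rewrite /rotR /translate /d' /K0 /=; congr (_, _).
    * rewrite /L0 in kl kL' *; lia.
    * move: mJ Jl; rewrite /Y0 in hla *; lia.
- case=> -[x xD ->]; case: (D_prop xD) => i [j [-> ir il /andP[mj jl] /andP[cj jW]]].
  + apply/imfsetP; exists (Posz i, Posz (j + X0)) => /=.
      apply/mem_skewP; exists i, (j + X0)%N; split => //.
      * by rewrite size_la'; rewrite /L0; lia.
      * by rewrite nth_mu' ?ifT /L0; lia.
      * by rewrite nth_la' ?ifT /L0; lia.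
    rewrite /trP /translate /d' /=; congr (_, _); lia.
  + apply/imfsetP; exists (Posz (2 * r0 + 1 - i), Posz (Y0 - j)) => /=.
      have hpc := pc_le i pc.
      have E : (r0 - (2 * r0 + 1 - i - L0) = i)%N by rewrite /L0; lia.
      have nL : (2 * r0 + 1 - i < L0)%N = false.
        by apply/negbTE; rewrite -leqNgt /L0; lia.
      have kl : (2 * r0 + 1 - i < 2 * L0)%N by rewrite /L0; lia.
      apply/mem_skewP; exists (2 * r0 + 1 - i)%N, (Y0 - j)%N; split => //.
      * by rewrite size_la'.
      * rewrite nth_mu' // nL E /Y0; lia.
      * rewrite nth_la' // nL E /Y0; lia.
    rewrite /rotR /translate /d' /K0 /=; congr (_, _).
    * lia.
    * rewrite /Y0; lia.
Qed.

Variable n : nat.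
Variable f : {fmap box -> int}.
Definition FF (x : box) : int := odflt 0 f.[? x].
Hypothesis HF1 : forall x, x \in D -> FF x \in signed_range n.
Hypothesis HF2 : forall x y, x \in D -> y \in D -> absz (FF x) = absz (FF y) -> x = y.
Hypothesis HF3 : forall x y, x \in D -> y \in D -> rel_box x y -> FF x < FF y.
Hypothesis HF4 : forall k, k \in signed_range n ->
  exists2 x, x \in D & FF x = k \/ FF x = - k.

Definition cellF (b : box) : seq int :=
  if b.1 < Posz L0 then [:: FF (b.1, b.2 - delta)]
  else [:: - FF (Posz (2 * r0 + 1) - b.1, K0 - b.2)].
Definition tt : filling := [fmap b : U => cellF (val b)].

Lemma domf_tt : domf tt = U. Proof. by []. Qed.

Lemma cell_tt b : b \in U -> cell tt b = cellF b.
Proof. by move=> bU; rewrite /cell fnd_mk bU. Qed.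

Lemma cellF_trP x : x \in D -> cellF (trP x) = [:: FF x].
Proof.
case/D_prop=> i [j [-> ir _ _ _]]; rewrite /cellF /trP /translate /= ifT.
  by congr [:: FF (_, _)]; lia.
by rewrite /L0; lia.
Qed.

Lemma cellF_rotR x : x \in D -> cellF (rotR x) = [:: - FF x].
Proof.
case/D_prop=> i [j [-> ir _ _ _]]; rewrite /cellF /rotR /= ifF.
  by congr [:: - FF (_, _)]; lia.
by apply/negbTE; rewrite /L0; lia.
Qed.

Lemma content_trP x : content (trP x) = content x + delta.
Proof. by rewrite /content /trP /translate /=; lia. Qed.

Lemma content_rotR x : content (rotR x) = - (content x + delta).
Proof. rewrite /content /rotR /K0 /delta /Y0 /X0 /=; lia. Qed.

Lemma content_D x : x \in D -> Posz m <= content x + delta.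
Proof. case/D_prop=> i [j [-> ir _ _ /andP[cj _]]]; rewrite /content /delta /=; lia. Qed.

Lemma trP_inj : injective trP.
Proof. by move=> [a b] [c d] /= []; rewrite /trP /translate /= => h1 h2; congr (_, _); lia. Qed.

Lemma rotR_inj : injective rotR.
Proof. by move=> [a b] [c d] /= []; rewrite /rotR /= => h1 h2; congr (_, _); lia. Qed.

Lemma trP_rotR x y : x \in D -> y \in D -> trP x <> rotR y.
Proof.
move=> xD yD E; have := content_D xD; have := content_D yD.
move: (congr1 content E); rewrite content_trP content_rotR; lia.
Qed.

Lemma U_cases b : b \in U -> exists2 x, x \in D & exists s : bool,
  b = (if s then trP x else rotR x) /\ cell tt b = [:: if s then FF x else - FF x].
Proof.
move=> bU; rewrite cell_tt //; case/memU: bU => -[x xD ->]; exists x => //.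
- by exists true; rewrite cellF_trP.
- by exists false; rewrite cellF_rotR.
Qed.

Lemma FF_neq0 x : x \in D -> FF x != 0.
Proof. by move/HF1; rewrite mem_signed_range => /andP[]. Qed.

Lemma FF_opp x : x \in D -> FF x = - FF x -> False.
Proof. move=> xD E; have := FF_neq0 xD; have -> : FF x = 0 by lia. by []. Qed.

Lemma signed_rangeN k : (- k \in signed_range n) = (k \in signed_range n).
Proof. by rewrite !mem_signed_range oppr_eq0 abszN. Qed.

Lemma tt_DYoung : is_DYoung n tt.
Proof.
split.
- exists la', mu', d'; split => //.
  + apply/andP; split.
    * apply/(sortedP 0%N) => k; rewrite size_la' => kl.
      rewrite !nth_la' //=; last by lia.
      case: (ltnP k.+1 L0) => k1L.
      - by rewrite ifT; [rewrite /= leq_add2r; apply: la_dec | lia].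
      case: (ltnP k L0) => kL.
      - have -> : (r0 - (k.+1 - L0) = r0)%N by rewrite /L0 in kL k1L *; lia.
        have -> : k = r0 by rewrite /L0 in kL k1L *; lia.
        case: xs_prop => _ _ h; rewrite /Y0 /X0 /c0 in h *; lia.
      - have := mu_dec (i := (r0 - (k.+1 - L0))%N) (j := (r0 - (k - L0))%N).
        by rewrite /L0 in kl kL k1L *; lia.
    * apply/allP => v /mapP [k]; rewrite mem_iota add0n => kl ->.
      case: ifP => _; first by rewrite /X0; lia.
      by have := la_le_W (r0 - (k - L0)); have := pc_le (r0 - (k - L0)) pc; rewrite /Y0; lia.
  + apply/andP; split.
    * apply/(sortedP 0%N) => k; rewrite size_mu' => kl.
      rewrite !nth_mu' //=; last by lia.
      case: (ltnP k.+1 L0) => k1L.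
      - by rewrite ifT; [rewrite /= leq_add2r; apply: mu_dec | lia].
      case: (ltnP k L0) => kL.
      - have -> : (r0 - (k.+1 - L0) = r0)%N by rewrite /L0 in kL k1L *; lia.
        have -> : k = r0 by rewrite /L0 in kL k1L *; lia.
        case: xs_prop => _ _ h; rewrite /Y0 /X0 /c0 in h *; lia.
      - have := la_dec (i := (r0 - (k.+1 - L0))%N) (j := (r0 - (k - L0))%N).
        by rewrite /L0 in kl kL k1L *; lia.
    * apply/allP => v /mapP [k]; rewrite mem_iota add0n => kl ->.
      case: ifP => _; first by rewrite /X0; lia.
      by have := la_le_W (r0 - (k - L0)); rewrite /Y0; lia.
  + apply/andP; split; first by rewrite size_la' size_mu'.
    apply/allP => k; rewrite mem_iota add0n size_mu' => kl.
    rewrite nth_la' // nth_mu' //; case: ifP => _; first by rewrite leq_add2r pc_le.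
    have := pc_le (r0 - (k - L0)) pc; have := la_le_W (r0 - (k - L0)); rewrite /Y0; lia.
- move=> k kS; have [x xD Ex] := HF4 kS.
  have nk : k != 0 by move: kS; rewrite mem_signed_range => /andP[].
  have key : forall b, b \in domf tt /\ k \in cell tt b ->
      exists2 y, y \in D & exists s : bool, b = (if s then trP y else rotR y) /\
        k = (if s then FF y else - FF y).
    move=> b [bU kb]; have [y yD [s [Eb Ec]]] := U_cases bU.
    by exists y => //; exists s; split => //; move: kb; rewrite Ec inE => /eqP.
  have uniq_k : forall b b', b \in domf tt /\ k \in cell tt b ->
      b' \in domf tt /\ k \in cell tt b' -> b = b'.
    move=> b b' /key [y yD [s [-> E1]]] /key [y' y'D [s' [-> E2]]].
    have a1 : absz k = absz (FF y) by rewrite E1; case: s {E1}; rewrite ?abszN.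
    have a2 : absz k = absz (FF y') by rewrite E2; case: s' {E2}; rewrite ?abszN.
    have yy : y = y' by apply: HF2 => //; rewrite -a1 -a2.
    subst y'; case: s E1; case: s' E2 => //= -> E; exfalso; apply: (FF_opp yD); lia.
  have PU : trP x \in U by apply/memU; left; exists x.
  have RU : rotR x \in U by apply/memU; right; exists x.
  case: Ex => Ex.
  + have H : trP x \in domf tt /\ k \in cell tt (trP x).
      by rewrite domf_tt cell_tt // cellF_trP // Ex inE.
    by exists (trP x); split => // b' Hb'; apply: uniq_k.
  + have H : rotR x \in domf tt /\ k \in cell tt (rotR x).
      by rewrite domf_tt cell_tt // cellF_rotR // Ex opprK inE.
    by exists (rotR x); split => // b' Hb'; apply: uniq_k.
- move=> b k bU; have [x xD [s [_ ->]]] := U_cases bU; rewrite inE => /eqP ->.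
  by case: s; rewrite ?signed_rangeN HF1.
- move=> b bU; have [x xD [s [_ ->]]] := U_cases bU; left.
  by exists (if s then FF x else - FF x).
- move=> b b' k bU b'U.
  have [x xD [s [Eb ->]]] := U_cases bU; have [y yD [s' [Eb' ->]]] := U_cases b'U.
  rewrite !inE => /eqP Ek /eqP Ek'.
  have a1 : absz k = absz (FF x) by rewrite Ek; case: s {Ek Eb}; rewrite ?abszN.
  have a2 : absz k = absz (FF y) by rewrite -[k]opprK Ek'; case: s' {Ek' Eb'}; rewrite ?abszN.
  have xy : x = y by apply: HF2 => //; rewrite -a1 -a2.
  subst y; rewrite Eb Eb'; case: s Ek Eb; case: s' Ek' Eb' => /= Ek' _ Ek _;
    rewrite ?content_trP ?content_rotR ?opprK //;
    exfalso; apply: (FF_opp xD); lia.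
Qed.

Lemma tt_standard : is_standard tt.
Proof.
move=> b b' bU b'U Hrel.
have [x xD [s [Eb ->]]] := U_cases bU; have [y yD [s' [Eb' ->]]] := U_cases b'U.
rewrite /rval /lval /=.
have [i [j [Ex ir _ _ /andP[cj _]]]] := D_prop xD.
have [i' [j' [Ey ir' _ _ /andP[cj' _]]]] := D_prop yD.
move: Hrel; rewrite Eb Eb'; case: s {Eb}; case: s' {Eb'} => Hrel.
- by apply: HF3 => //; move: Hrel; rewrite /rel_box /trP /translate Ex Ey /=; lia.
- exfalso; move: Hrel; rewrite /trP /rotR /translate /K0 /delta /Y0 /X0 Ex Ey /=; lia.
- exfalso; move: Hrel; rewrite /trP /rotR /translate /K0 /delta /Y0 /X0 Ex Ey /=; lia.
- rewrite ltrN2; apply: HF3 => //; move: Hrel; rewrite /rel_box /rotR Ex Ey /=; lia.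
Qed.

Lemma tt_smallest : smallest_nonneg_content tt (Posz m).
Proof.
split.
- exists (trP (Posz r0, Posz c0)); split.
    by rewrite domf_tt; apply/memU; left; exists (Posz r0, Posz c0) => //; apply: r0c0_D.
  by rewrite content_trP /content /delta /=; lia.
- move=> b bU; have [x xD [s [-> _]]] := U_cases bU; have := content_D xD.
  by case: s; rewrite ?content_trP ?content_rotR; lia.
Qed.

Lemma tt_pos : pos_part_is tt la mu f.
Proof.
exists (0, delta); split.
- move=> b; split.
  + case=> bU; have [x xD [s [-> _]]] := U_cases bU; have := content_D xD.
    case: s; rewrite ?content_trP ?content_rotR => h1 h2; last by lia.
    by exists x.
  + case=> x xD ->; split; first by rewrite domf_tt; apply/memU; left; exists x.
    by have := content_D xD; rewrite -/(trP x) content_trP; lia.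
- move=> x xD; rewrite -/(trP x) cell_tt ?cellF_trP //.
  by apply/memU; left; exists x.
Qed.

End Construct.

Lemma fnd_mkA (K : choiceType) (V : Type) (A : {fset K}) (h : A -> V) (y : A) :
  ([fmap x : A => h x] : {fmap K -> V}).[? val y] = Some (h y).
Proof. by rewrite /fnd /= valK /= ffunE. Qed.

Lemma fnd_mkN (K : choiceType) (V : Type) (A : {fset K}) (h : A -> V) (k : K) :
  k \notin A -> ([fmap x : A => h x] : {fmap K -> V}).[? k] = None.
Proof. by move=> kA; rewrite not_fnd. Qed.

Lemma translate_inj d : injective (translate d).
Proof. by move=> [a b] [c e] [] h1 h2; congr (_, _); lia. Qed.

Lemma negcount_gen (t : filling) la mu (f : {fmap box -> int}) (d : box) :
  (forall b, (b \in domf t /\ 0 < content b) <->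
     exists2 x, x \in skew_boxes la mu & b = translate d x) ->
  (forall x, x \in skew_boxes la mu -> cell t (translate d x) = [:: odflt 0 f.[? x]]) ->
  neg_count_pos t =
  count (fun x => odflt 0 f.[? x] < 0) (enum_fset (skew_boxes la mu)).
Proof.
move=> H1 H2; rewrite /neg_count_pos -!size_filter.
transitivity (size (map (translate d)
  (filter (fun x => odflt 0 f.[? x] < 0) (enum_fset (skew_boxes la mu))))); last first.
  by rewrite size_map.
apply: perm_size; apply: uniq_perm.
- by apply: filter_uniq; apply: fset_uniq.
- by rewrite map_inj_uniq ?filter_uniq ?fset_uniq //; apply: translate_inj.
move=> b; rewrite mem_filter; apply/andP/mapP.
- case=> /andP[cb hb] bt.
  have [x xD Eb] := (H1 b).1 (conj bt cb).
  exists x => //; rewrite mem_filter xD andbT.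
  by move: hb; rewrite Eb H2 //= orbF.
- case=> x; rewrite mem_filter => /andP[fx xD] ->.
  have [bt cb] := (H1 (translate d x)).2 (ex_intro2 _ _ x xD erefl).
  by rewrite cb H2 //= orbF fx.
Qed.

Lemma count_fset (A : {fset box}) (p : pred box) :
  count p (enum_fset A) = #|[pred x : A | p (val x)]|.
Proof. by rewrite enum_fsetE count_map -count_enumT. Qed.

Section Back.
Variables (n : nat) (la mu : seq nat) (f : {fmap box -> int}) (t : filling).
Hypotheses (tY : is_DYoung n t) (tS : is_standard t) (tP : pos_part_is t la mu f).
Local Notation D := (skew_boxes la mu).
Local Notation F x := (odflt 0 f.[? x]).

Lemma back_cell : exists d : box,
  (forall x, x \in D -> translate d x \in domf t /\ 0 < content (translate d x)) /\
  (forall x, x \in D -> cell t (translate d x) = [:: F x]).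
Proof.
case: tP => d [H1 H2]; exists d; split => // x xD.
by apply/(H1 (translate d x)); exists x.
Qed.

Lemma back_P1 x : x \in D -> F x \in signed_range n.
Proof.
case: back_cell => d [H1 H2] xD; case: tY => _ _ H3 _ _.
by apply: (H3 (translate d x)); [case: (H1 x xD) | rewrite H2 // inE].
Qed.

Lemma back_P2 x y : x \in D -> y \in D -> F x = F y -> x = y.
Proof.
case: back_cell => d [H1 H2] xD yD E; case: tY => _ H _ _ _.
have [b [_ U]] := H _ (back_P1 xD).
have cx : F x \in cell t (translate d x) by rewrite H2 // inE.
have cy : F x \in cell t (translate d y) by rewrite H2 // inE E.
have ex := U (translate d x) (conj (H1 x xD).1 cx).
have ey := U (translate d y) (conj (H1 y yD).1 cy).
by apply: (translate_inj (d := d)); rewrite -ex -ey.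
Qed.

Lemma back_P3 x y : x \in D -> y \in D -> F x = - F y -> False.
Proof.
case: back_cell => d [H1 H2] xD yD E; case: tY => _ _ _ _ H.
have := H (translate d y) (translate d x) (F y) (H1 y yD).1 (H1 x xD).1.
rewrite !H2 // !inE E !eqxx => /(_ isT isT) Ec.
have := (H1 x xD).2; have := (H1 y yD).2; rewrite Ec; lia.
Qed.

Lemma back_P4 x y : x \in D -> y \in D -> rel_box x y -> F x < F y.
Proof.
case: back_cell => d [H1 H2] xD yD R.
have := tS (H1 x xD).1 (H1 y yD).1; rewrite !H2 //; apply.
by move: R; rewrite /rel_box /translate /=; lia.
Qed.

Lemma back_abs x y : x \in D -> y \in D -> absz (F x) = absz (F y) -> x = y.
Proof.
move=> xD yD E; have : F x = F y \/ F x = - F y by lia.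
by case=> [/back_P2 | /back_P3]; [apply | move=> /(_ xD yD)].
Qed.

Lemma back_count : neg_count_pos t = count (fun x => F x < 0) (enum_fset D).
Proof. by case: tP => d [H1 H2]; apply: (negcount_gen H1 H2). Qed.
End Back.

Lemma fnd_odflt (K : choiceType) (V : Type) (g : {fmap K -> V}) (d : V) (x : K) :
  x \in domf g -> g.[? x] = Some (odflt d g.[? x]).
Proof. by case: fndP. Qed.

Definition relb (x y : box) : bool :=
  ((x.1 == y.1) && (x.2 < y.2)) || ((x.2 == y.2) && (x.1 < y.1)).
Lemma relbP x y : reflect (rel_box x y) (relb x y).
Proof.
apply: (iffP orP) => [[/andP[/eqP h1 h2]|/andP[/eqP h1 h2]]|[[h1 h2]|[h1 h2]]].
- by left.
- by right.
- by left; rewrite h1 eqxx h2.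
- by right; rewrite h1 eqxx h2.
Qed.

Section Main.
Variables (la mu : seq nat) (n' m : nat).
Local Notation n := n'.+1.
Local Notation D := (skew_boxes la mu).
Hypotheses (pla : is_partition la) (pmu : is_partition mu)
           (pc : part_contains la mu) (cardD : #|` D| = n) (m0 : (0 < m)%N).

Lemma cardDT : #|{: D}| = n.
Proof. by rewrite -cardfE cardD. Qed.

Definition sytm (g : {ffun D -> 'I_n}) : bool :=
  injectiveb g && [forall x : D, forall y : D, relb (val x) (val y) ==> (g x < g y)%N].
Definition Sy := [set g | sytm g].
Definition toS (g : {ffun D -> 'I_n}) : {fmap box -> nat} := [fmap x : D => (g x).+1].
Definition Phi (q : {set 'I_n} * {ffun D -> 'I_n}) : {fmap box -> int} :=
  [fmap x : D => wS q.1 (q.2 x)].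

Lemma fnd_in (V : Type) (h : D -> V) (x : box) (xD : x \in D) :
  ([fmap y : D => h y] : {fmap box -> V}).[? x] = Some (h [` xD]).
Proof. exact: (fnd_mkA h [` xD]). Qed.

Lemma sytm_inj g : sytm g -> injective g.
Proof. by case/andP => /injectiveP. Qed.

Lemma sytm_rel g (x y : D) : sytm g -> rel_box (val x) (val y) -> (g x < g y)%N.
Proof.
case/andP => _ /forallP /(_ x) /forallP /(_ y) /implyP H R.
by apply: H; apply/relbP.
Qed.

Lemma sytm_onto g (r : 'I_n) : sytm g -> exists x, g x = r.
Proof.
move=> sg; have := inj_card_onto (sytm_inj sg) _ r.
rewrite card_ord cardDT leqnn => /(_ isT) /codomP [x ->]; by exists x.
Qed.

Lemma toS_SYT g : sytm g -> is_SYT n la mu (toS g).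
Proof.
move=> sg; split => //.
- by move=> x xD; rewrite fnd_in /= ltn_ord.
- move=> x y xD yD; rewrite !fnd_in => E.
  have : g [` xD] = g [` yD] by apply: val_inj; case: E.
  by move=> /(sytm_inj sg) /(congr1 val).
- move=> x y xD yD R; rewrite !fnd_in /= ltnS.
  exact: (sytm_rel (x := [` xD]) (y := [` yD]) sg R).
Qed.

Lemma SYT_toS g' : is_SYT n la mu g' -> exists2 g, sytm g & toS g = g'.
Proof.
case=> dom vals inj std.
have inD : forall x : D, val x \in domf g' by move=> x; rewrite dom fsvalP.
pose v (x : box) := odflt 0%N g'.[? x].
have vpos : forall x : D, (0 < v (val x) <= n)%N by move=> x; apply: vals (inD x).
have vE : forall x : D, nat_of_ord (inord (v (val x)).-1 : 'I_n) = (v (val x)).-1.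
  by move=> x; rewrite inordK //; have := vpos x; lia.
exists [ffun x : D => inord (v (val x)).-1].
- apply/andP; split.
  + apply/injectiveP => x y; rewrite !ffunE => /(congr1 (@nat_of_ord n)); rewrite !vE => E.
    apply: val_inj; apply: inj (inD x) (inD y) _.
    rewrite (fnd_odflt 0%N (inD x)) (fnd_odflt 0%N (inD y)); congr Some.
    by have := vpos x; have := vpos y; rewrite /v in E *; lia.
  + apply/forallP => x; apply/forallP => y; apply/implyP => /relbP R.
    rewrite !ffunE !vE.
    have := std (val x) (val y) (inD x) (inD y) R.
    have key : forall a b : nat, (0 < a)%N -> (a < b)%N -> (a.-1 < b.-1)%N by move=> *; lia.
    by apply: key; case/andP: (vpos x).
- apply/fmapP => k; case: (boolP (k \in D)) => kD.
  + have kg : k \in domf g' by rewrite dom.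
    rewrite fnd_in ffunE /= (fnd_odflt 0%N kg); congr Some.
    have := vE [` kD]; have := vpos [` kD]; rewrite /v /= => h1 h2.
    by rewrite h2; lia.
  + have kg : k \notin domf g' by rewrite dom.
    by rewrite (not_fnd kg) not_fnd.
Qed.

Lemma toS_inj : injective toS.
Proof.
move=> g1 g2 E; apply/ffunP => x; apply: ord_inj.
have H : (toS g1).[? val x] = (toS g2).[? val x] by rewrite E.
by move: H; rewrite /toS !fnd_mkA => -[].
Qed.

Lemma card_SYT : card_is (is_SYT n la mu) #|Sy|.
Proof.
exists (map toS (enum Sy)); split.
- by rewrite map_inj_uniq ?enum_uniq //; apply: toS_inj.
- move=> g'; split.
  + by case/SYT_toS => g sg <-; apply: map_f; rewrite mem_enum inE.
  + by case/mapP => g; rewrite mem_enum inE => sg ->; apply: toS_SYT.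
- by rewrite size_map cardE.
Qed.

Lemma exists_xs : exists2 xs, xs \in D & forall x, x \in D -> x.1 <= xs.1.
Proof.
have : (0 < #|{: D}|)%N by rewrite cardDT.
case/card_gt0P => x0 _.
case: (@arg_maxnP _ x0 predT (fun y : D => absz (val y).1)) => // y _ H.
exists (val y) => //; first exact: fsvalP.
move=> x xD; have := H [` xD] isT => /=.
case/mem_skewP: xD => i [j [-> _ _ _]]; case/mem_skewP: (fsvalP y) => i' [j' [-> _ _ _]].
by rewrite /= lez_nat.
Qed.

Lemma Phi_F q x (xD : x \in D) : odflt 0 (Phi q).[? x] = wS q.1 (q.2 [` xD]).
Proof. by rewrite /Phi fnd_in. Qed.

Lemma sub_val (x : D) (xD : val x \in D) : [` xD] = x.
Proof. by apply: val_inj. Qed.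

Lemma sytm_count (e : {set 'I_n}) g : sytm g -> #|[pred x : D | wS e (g x) < 0]| = #|e|.
Proof.
move=> sg; rewrite -card_neg_wS -(card_imset _ (sytm_inj sg)); apply: eq_card => r.
rewrite inE /=; apply/imsetP/idP => [[x xP ->] //|rP].
by have [x Ex] := sytm_onto r sg; exists x; rewrite // inE /= Ex.
Qed.

Definition A (p : bool) := [set q : {set 'I_n} * {ffun D -> 'I_n} |
  (~~ odd #|q.1| == p) && sytm q.2].

Lemma wS_abs (e : {set 'I_n}) v k : v \in VS e -> (absz k <= n)%N -> k != 0 -> absz v = absz k ->
  v = k \/ v = - k.
Proof. by move=> *; lia. Qed.

Lemma Phi_T p q : q \in A p -> T_set n la mu m p (Phi q).
Proof.
case: q => e g; rewrite inE /= => /andP[/eqP par sg]; split => //.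
have [xs xsD xsmax] := exists_xs.
pose F x := odflt 0 (Phi (e, g)).[? x].
have H1 : forall x, x \in D -> F x \in signed_range n.
  by move=> x xD; rewrite /F Phi_F; apply: VS_signed; apply: wS_mem.
have H2 : forall x y, x \in D -> y \in D -> absz (F x) = absz (F y) -> x = y.
  move=> x y xD yD; rewrite /F !Phi_F /=.
  have := wS_mem e (ltn_ord (g [` xD])); have := wS_mem e (ltn_ord (g [` yD])).
  rewrite !mem_VS => /existsP[k /eqP Ek] /existsP[k' /eqP Ek'].
  rewrite Ek Ek' !abs_vS => -[] /val_inj kk; subst k'.
  have : wS e (g [` yD]) = wS e (g [` xD]) by rewrite Ek Ek'.
  move/wS_inj => /(_ (ltn_ord _) (ltn_ord _)) /ord_inj /(sytm_inj sg).
  by move/(congr1 val).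
have H3 : forall x y, x \in D -> y \in D -> rel_box x y -> F x < F y.
  move=> x y xD yD R; rewrite /F !Phi_F /=; apply: wS_lt => //.
  exact: (sytm_rel (x := [` xD]) (y := [` yD]) sg R).
have H4 : forall k, k \in signed_range n -> exists2 x, x \in D & F x = k \/ F x = - k.
  move=> k; rewrite mem_signed_range => /andP[k0 kn].
  pose j : 'I_n := inord (absz k).-1.
  have jv : nat_of_ord j = (absz k).-1 by rewrite inordK //; move: k0 kn; lia.
  have vV : vS e j \in VS e by apply: map_f; rewrite mem_enum.
  have [x Ex] := sytm_onto (Ordinal (rkS_lt vV)) sg.
  exists (val x); first exact: fsvalP.
  rewrite /F (Phi_F _ (fsvalP x)) sub_val /= Ex /= wS_rkS //; apply: (wS_abs vV kn k0).
  by rewrite abs_vS jv; move: k0; lia.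
exists (tt la mu m xs (Phi (e, g))); split.
- by apply: tt_DYoung.
- by apply: tt_standard.
- by apply: tt_smallest.
- by apply: tt_pos.
- rewrite (back_count (tt_pos pla pmu pc m0 xsD xsmax (Phi (e, g)))).
  rewrite count_fset -par -(sytm_count e sg); congr (~~ odd _); apply: eq_card => x.
  change ((odflt 0 (Phi (e, g)).[? val x] < 0) = (wS e (g x) < 0)).
  by rewrite (Phi_F _ (fsvalP x)) sub_val.
Qed.


Lemma T_Phi p f : T_set n la mu m p f -> exists2 q, q \in A p & Phi q = f.
Proof.
case=> dom [t [tY tS tsm tP hpar]].
pose F x := odflt 0 f.[? x].
have inD : forall x : D, val x \in domf f by move=> x; rewrite dom fsvalP.
pose e := [set k : 'I_n | [exists x : D, F (val x) == - Posz k.+1]].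
have FV : forall x : D, F (val x) \in VS e.
  move=> x; have : F (val x) \in signed_range n by apply: (back_P1 tY tP (fsvalP x)).
  rewrite mem_signed_range => /andP[F0 Fn].
  pose k : 'I_n := inord (absz (F (val x))).-1.
  have kv : nat_of_ord k = (absz (F (val x))).-1 by rewrite inordK //; move: F0 Fn; lia.
  case: (ltrP (F (val x)) 0) => Fs.
  - have -> : F (val x) = - Posz k.+1 by rewrite kv; move: F0 Fs; lia.
    rewrite VS_neg inE; apply/existsP; exists x; apply/eqP.
    by rewrite kv; move: F0 Fs; lia.
  - have -> : F (val x) = Posz k.+1 by rewrite kv; move: F0 Fs; lia.
    rewrite VS_pos inE; apply/negP => /existsP[y /eqP Ey].
    have H3 : F (val y) = - F (val x) -> False by apply: (back_P3 tY tP (fsvalP y) (fsvalP x)).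
    by apply: H3; rewrite Ey kv; move: F0 Fs; lia.
pose g := [ffun x : D => (inord (rkS e (F (val x))) : 'I_n)].
have wg : forall x, wS e (g x) = F (val x).
  by move=> x; rewrite ffunE inordK ?rkS_lt ?FV // wS_rkS.
have sg : sytm g.
  apply/andP; split.
  + apply/injectiveP => x y Exy; apply: val_inj.
    have H2 : F (val x) = F (val y) -> val x = val y by apply: (back_P2 tY tP (fsvalP x) (fsvalP y)).
    by apply: H2; rewrite -!wg Exy.
  + apply/forallP => x; apply/forallP => y; apply/implyP => /relbP R.
    have : F (val x) < F (val y) by apply: (back_P4 tS tP (fsvalP x) (fsvalP y) R).
    by rewrite -!wg wS_ltE.
exists (e, g).
- rewrite inE /= sg andbT; apply/eqP; rewrite -hpar (back_count tP) count_fset.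
  rewrite -(sytm_count e sg); congr (~~ odd _); apply: eq_card => x.
  change ((wS e (g x) < 0) = (F (val x) < 0)); by rewrite wg.
- apply/fmapP => k; case: (boolP (k \in D)) => kD.
  + have kf : k \in domf f by rewrite dom.
    rewrite /Phi (fnd_in _ kD) /= (fnd_odflt 0 kf); congr Some.
    by rewrite wg.
  + have kf : k \notin domf f by rewrite dom.
    by rewrite (not_fnd kf) not_fnd.
Qed.

Lemma e_char (e : {set 'I_n}) g k : sytm g ->
  (k \in e) = [exists x : D, wS e (g x) == - Posz k.+1].
Proof.
move=> sg; apply/idP/existsP => [ke|[x /eqP Ex]].
- have vV : - Posz k.+1 \in VS e by rewrite VS_neg.
  have [x Ex] := sytm_onto (Ordinal (rkS_lt vV)) sg.
  by exists x; rewrite Ex /= wS_rkS.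
- by rewrite -VS_neg -Ex wS_mem.
Qed.

Lemma Phi_inj : {in [pred q | sytm q.2] &, injective Phi}.
Proof.
move=> [e g] [e' g'] /= sg sg' E.
have Ex : forall x : D, wS e (g x) = wS e' (g' x).
  move=> x; have H : (Phi (e, g)).[? val x] = (Phi (e', g')).[? val x] by rewrite E.
  by move: H; rewrite /Phi !fnd_mkA => -[].
have ee : e = e'.
  by apply/setP => k; rewrite (e_char _ _ sg) (e_char _ _ sg'); apply: eq_existsb => x; rewrite Ex.
subst e'; congr (_, _); apply/ffunP => x; apply: ord_inj.
by apply: (wS_inj (e := e)); rewrite ?ltn_ord ?Ex.
Qed.

Lemma card_T p : card_is (T_set n la mu m p) #|A p|.
Proof.
exists (map Phi (enum (A p))); split.
- rewrite map_inj_in_uniq ?enum_uniq //.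
  move=> q q'; rewrite !mem_enum !inE => /andP[_ sq] /andP[_ sq'].
  by apply: Phi_inj.
- move=> f; split.
  + by case/T_Phi => q qA <-; apply: map_f; rewrite mem_enum.
  + by case/mapP => q; rewrite mem_enum => qA ->; apply: Phi_T.
- by rewrite size_map cardE.
Qed.

End Main.

Lemma card_parity n' p :
  #|[set e : {set 'I_n'.+1} | ~~ odd #|e| == p]| = (2 ^ n')%N.
Proof.
pose E b := [set e : {set 'I_n'.+1} | ~~ odd #|e| == b].
pose tog (e : {set 'I_n'.+1}) := if ord0 \in e then e :\ ord0 else ord0 |: e.
have togK : involutive tog.
  move=> e; rewrite /tog; case: (boolP (ord0 \in e)) => He.
  - by rewrite in_setD1 eqxx /= setD1K.
  - by rewrite setU11 setU1K.
have togO : forall e, odd #|tog e| = ~~ odd #|e|.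
  move=> e; rewrite /tog; case: ifP => He.
  - by rewrite [in RHS](cardsD1 ord0) He /= negbK.
  - by rewrite cardsU1 He.
have EE : forall b, #|E (~~ b)| = #|E b|.
  move=> b; rewrite -(card_imset _ (can_inj togK)); apply: eq_card => e.
  rewrite [in RHS]inE; apply/imsetP/idP => [[e' He' ->]|He].
  - by move: He'; rewrite inE togO; case: b; case: (odd #|e'|).
  - exists (tog e); last by rewrite togK.
    by rewrite inE togO; move: He; case: b; case: (odd #|e|).
have tot : (#|E true| + #|E false| = 2 ^ n'.+1)%N.
  have -> : E false = ~: E true.
    by apply/setP => e; rewrite !inE; case: (odd #|e|).
  rewrite cardsC -cardsT -powersetT card_powerset cardsT card_ord //.
have := EE true; rewrite /= => h; rewrite h in tot.
change (#|E p| = (2 ^ n')%N); rewrite expnS in tot.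
rewrite addnn -mul2n in tot; move/eqP: tot; rewrite eqn_pmul2l // => /eqP tot.
by case: p; rewrite ?h.
Qed.

Lemma card_A la mu n' p : #|A la mu n' p| = (2 ^ n' * #|Sy la mu n'|)%N.
Proof.
rewrite -(card_parity n' p) -cardsX; apply: eq_card => -[e g].
by rewrite !inE.
Qed.

Local Close Scope ring_scope.

Theorem proposition4p2 (la mu : seq nat) (n m : nat) :
  is_partition la -> is_partition mu -> part_contains la mu ->
  #|` skew_boxes la mu| = n -> (0 < n)%N -> (0 < m)%N ->
  exists f_la : nat,
    [/\ card_is (is_SYT n la mu) f_la,
        card_is (T_set n la mu m true) (2 ^ (n - 1) * f_la)%N &
        card_is (T_set n la mu m false) (2 ^ (n - 1) * f_la)%N].
Proof.
move=> pla pmu pc cD; case: n cD => [|n'] cD // _ m0.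
exists #|Sy la mu n'|; rewrite subn1 /=; split.
- exact: (card_SYT (m := m) pla pmu pc cD m0).
- by rewrite -(card_A la mu n' true); apply: (card_T pla pmu pc cD m0).
- by rewrite -(card_A la mu n' false); apply: (card_T pla pmu pc cD m0).
Qed.
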